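(* Let $F/\mathbb{Q}_p$ be a finite extension with ring of integers $\mathcal{O}_F$, uniformizer $\pi$, and residue field $k_F$ of cardinality $q$. For $\lambda \in k_F^\times$ let $[\lambda] \in \mathcal{O}_F$ be the unique $(q-1)$-st root of unity lifting $\lambda$, and set $[0] = 0$. Let $I_0 = \{0\}$ and for $m \in \mathbb{N}$ let $I_m = \{ [\lambda_0] + \pi[\lambda_1] + \dots + \pi^{m-1}[\lambda_{m-1}] : (\lambda_0, \dots, \lambda_{m-1}) \in k_F^m \} \subset \mathcal{O}_F$. Then the set \[ \coprod_{m \geq 0} \left\{ \begin{pmatrix} \pi^m & 0 \\ \pi^{-m} \kappa & \pi^{-m} \end{pmatrix} : \kappa \in I_{2m} \right\} \ \sqcup\ \coprod_{m \geq 1} \left\{ \begin{pmatrix} 0 & -\pi^m \\ \pi^{-m} & -\pi^{-m+1}\kappa \end{pmatrix} : \kappa \in I_{2m-1} \right\} \] is a complete set of representatives (each coset represented exactly once) of the right cosets $\mathrm{SL}_2(\mathcal{O}_F) g$ of $\mathrm{SL}_2(\mathcal{O}_F)$ in $\mathrm{SL}_2(F)$. *)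

(* Defs.v *)
From HB Require Import structures.
From mathcomp Require Import all_boot all_order all_algebra.
Set Implicit Arguments. Unset Strict Implicit. Unset Printing Implicit Defensive.
Import Order.TTheory GRing.Theory Num.Theory.
Local Open Scope ring_scope.

(* A (normalized, discrete) valuation v on a field F, given on nonzero
   elements (the value at 0 is irrelevant and never used). *)
Definition is_discrete_valuation (F : fieldType) (v : F -> int) : Prop :=
  (forall x y : F, x != 0 -> y != 0 -> v (x * y) = v x + v y) /\
  (forall x y : F, x != 0 -> y != 0 -> x + y != 0 ->
      Num.min (v x) (v y) <= v (x + y)).

(* "x is 0 or v x >= N", i.e. x lies in pi^N O_F. *)
Definition vge (F : fieldType) (v : F -> int) (x : F) (N : int) : bool :=
  (x == 0) || (N <= v x).

Definition OF (F : fieldType) (v : F -> int) (x : F) : bool := vge v x 0.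

Definition v_complete (F : fieldType) (v : F -> int) : Prop :=
  forall u : nat -> F,
    (forall N : int, exists n0 : nat, forall m n : nat,
        (n0 <= m)%N -> (n0 <= n)%N -> vge v (u m - u n) N) ->
    exists l : F, forall N : int, exists n0 : nat, forall n : nat,
        (n0 <= n)%N -> vge v (u n - l) N.

(* red : O_F -> k is a surjective ring morphism with kernel pi O_F, so that
   k is (isomorphic to) the residue field O_F / pi O_F. *)
Definition is_residue_map (F : fieldType) (v : F -> int) (k : fieldType)
    (red : F -> k) : Prop :=
  [/\ red 1 = 1,
      (forall x y, OF v x -> OF v y -> red (x + y) = red x + red y),
      (forall x y, OF v x -> OF v y -> red (x * y) = red x * red y),
      (forall x, OF v x -> (red x = 0 <-> vge v x 1)) &
      (forall l : k, exists2 x, OF v x & red x = l)].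

Definition is_teichmuller (F : fieldType) (v : F -> int) (k : finFieldType)
    (red : F -> k) (tlift : k -> F) : Prop :=
  tlift 0 = 0 /\
  forall l : k, l != 0 ->
    [/\ OF v (tlift l), red (tlift l) = l & tlift l ^+ (#|k|.-1) = 1].

Definition Iset (F : fieldType) (k : finFieldType) (tlift : k -> F) (pi : F)
    (n : nat) (x : F) : Prop :=
  exists lam : 'I_n -> k, x = \sum_(i < n) pi ^+ i * tlift (lam i).

Definition mx2 (F : fieldType) (a b c d : F) : 'M[F]_2 :=
  \matrix_(i < 2, j < 2)
    if (i == 0 :> nat) then (if (j == 0 :> nat) then a else b)
    else (if (j == 0 :> nat) then c else d).

Definition SL2 (F : fieldType) (A : 'M[F]_2) : Prop := \det A = 1.
Definition SL2O (F : fieldType) (v : F -> int) (A : 'M[F]_2) : Prop :=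
  \det A = 1 /\ forall i j, OF v (A i j).

(* The representatives: b = false is the first family (m >= 0, kappa in I_2m),
   b = true the second (m >= 1, kappa in I_(2m-1)). *)
Definition rep_index (F : fieldType) (k : finFieldType) (tlift : k -> F)
    (pi : F) (b : bool) (m : nat) (kappa : F) : Prop :=
  if b then (1 <= m)%N /\ Iset tlift pi (2 * m - 1) kappa
  else Iset tlift pi (2 * m) kappa.

Definition rep (F : fieldType) (pi : F) (b : bool) (m : nat) (kappa : F)
    : 'M[F]_2 :=
  if b then mx2 0 (- pi ^+ m) (pi ^- m) (- (pi ^- m * pi) * kappa)
  else mx2 (pi ^+ m) 0 (pi ^- m * kappa) (pi ^- m).

(* Main.v *)
Require Import Defs.
From HB Require Import structures.
From mathcomp Require Import all_boot all_order all_algebra.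
From mathcomp Require Import ring lra zify.
Import Order.TTheory GRing.Theory Num.Theory.
Local Open Scope ring_scope.


Lemma mx2_mul (F : fieldType) (a b c d a' b' c' d' : F) :
  mx2 a b c d *m mx2 a' b' c' d' =
  mx2 (a*a'+b*c') (a*b'+b*d') (c*a'+d*c') (c*b'+d*d').
Proof.
apply/matrixP => i j; rewrite !mxE !big_ord_recl big_ord0 !mxE /=.
by case: i => [[|[|//]]] Hi; case: j => [[|[|//]]] Hj /=; rewrite addr0.
Qed.

Lemma mx2_eta (F : fieldType) (g : 'M[F]_2) : g = mx2 (g 0 0) (g 0 1) (g 1 0) (g 1 1).
Proof.
apply/matrixP => i j; rewrite !mxE.
by case: i => [[|[|//]]] Hi; case: j => [[|[|//]]] Hj /=; congr (g _ _); apply: val_inj.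
Qed.

Lemma det_mx2 (F : fieldType) (a b c d : F) : \det (mx2 a b c d) = a * d - b * c.
Proof.
rewrite (expand_det_row _ 0) !big_ord_recl big_ord0 /cofactor !det_mx11 !mxE /=.
by rewrite /bump /= expr0 expr1 mul1r mulN1r addr0 mulrN. Qed.


Set Implicit Arguments. Unset Strict Implicit.


Lemma v1 (F : fieldType) (v : F -> int) (hv : is_discrete_valuation v) : v 1 = 0.
Proof. have [hm _] := hv; have := hm 1 1 (oner_neq0 _) (oner_neq0 _); rewrite mulr1. lia. Qed.

Lemma vM (F : fieldType) (v : F -> int) (hv : is_discrete_valuation v) x y :
  x != 0 -> y != 0 -> v (x * y) = v x + v y.
Proof. by case: hv => hm _; apply: hm. Qed.

Lemma vV (F : fieldType) (v : F -> int) (hv : is_discrete_valuation v) x :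
  x != 0 -> v x^-1 = - v x.
Proof.
move=> hx; have := vM hv hx (invr_neq0 hx).
rewrite mulfV // (v1 hv); lia.
Qed.

Lemma vN (F : fieldType) (v : F -> int) (hv : is_discrete_valuation v) x :
  x != 0 -> v (- x) = v x.
Proof.
move=> hx; have hN1 : v (-1) = 0.
  have h1 : -1 != 0 :> F by rewrite oppr_eq0 oner_eq0.
  have := vM hv h1 h1; rewrite mulrNN mulr1 (v1 hv); lia.
by rewrite -mulN1r vM ?oppr_eq0 ?oner_eq0 // hN1 add0r.
Qed.

Lemma vX (F : fieldType) (v : F -> int) (hv : is_discrete_valuation v) x n :
  x != 0 -> v (x ^+ n) = (n%:Z * v x)%R.
Proof.
move=> hx; elim: n => [|n IH]; first by rewrite expr0 (v1 hv) mul0r.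
rewrite exprS vM ?expf_neq0 // IH; lia.
Qed.

Lemma vXN (F : fieldType) (v : F -> int) (hv : is_discrete_valuation v) x n :
  x != 0 -> v (x ^- n) = - (n%:Z * v x)%R.
Proof. by move=> hx; rewrite vV ?expf_neq0 // vX. Qed.

Lemma vge0 (F : fieldType) (v : F -> int) N : vge v 0 N.
Proof. by rewrite /vge eqxx. Qed.

Lemma vge_nz (F : fieldType) (v : F -> int) x N : x != 0 -> vge v x N = (N <= v x).
Proof. by rewrite /vge => /negbTE ->. Qed.

Lemma vge_le (F : fieldType) (v : F -> int) x N M : vge v x N -> M <= N -> vge v x M.
Proof. rewrite /vge => /orP [->//|h] hM; apply/orP; right; lia. Qed.

Lemma vgeN (F : fieldType) (v : F -> int) (hv : is_discrete_valuation v) x N :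
  vge v (- x) N = vge v x N.
Proof.
have [->|hx] := eqVneq x 0; first by rewrite oppr0.
by rewrite !vge_nz ?oppr_eq0 // vN.
Qed.

Lemma vgeD (F : fieldType) (v : F -> int) (hv : is_discrete_valuation v) x y N :
  vge v x N -> vge v y N -> vge v (x + y) N.
Proof.
have [->|hx] := eqVneq x 0; first by rewrite add0r.
have [->|hy] := eqVneq y 0; first by rewrite addr0.
have [->|hxy] := eqVneq (x + y) 0; first by rewrite vge0.
rewrite !vge_nz // => h1 h2.
have [_ hu] := hv; have := hu x y hx hy hxy.
apply: le_trans; by rewrite le_min h1 h2.
Qed.

Lemma vgeB (F : fieldType) (v : F -> int) (hv : is_discrete_valuation v) x y N :
  vge v x N -> vge v y N -> vge v (x - y) N.
Proof. by move=> h1 h2; apply: vgeD => //; rewrite vgeN. Qed.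

Lemma vgeM (F : fieldType) (v : F -> int) (hv : is_discrete_valuation v) x y N M :
  vge v x N -> vge v y M -> vge v (x * y) (N + M).
Proof.
have [->|hx] := eqVneq x 0; first by move=> *; rewrite mul0r vge0.
have [->|hy] := eqVneq y 0; first by move=> *; rewrite mulr0 vge0.
rewrite !vge_nz ?mulf_neq0 // (vM hv) //; lia.
Qed.

Lemma vge_v (F : fieldType) (v : F -> int) x : vge v x (v x).
Proof. by rewrite /vge lexx orbT. Qed.

Lemma vge_invM (F : fieldType) (v : F -> int) (hv : is_discrete_valuation v) y x N :
  y != 0 -> vge v (y * x) N -> vge v x (N - v y).
Proof.
move=> hy h; have -> : x = y^-1 * (y * x) by rewrite mulrA mulVf // mul1r.
have := vgeM hv (vge_v v y^-1) h; rewrite vV //.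
move/vge_le; apply; lia.
Qed.

Lemma vge1 (F : fieldType) (v : F -> int) (hv : is_discrete_valuation v) N :
  vge v 1 N = (N <= 0).
Proof. by rewrite vge_nz ?oner_eq0 // v1. Qed.


Lemma red0 (F : fieldType) (v : F -> int) (k : fieldType) (red : F -> k) :
  is_residue_map v red -> red 0 = 0.
Proof.
case=> _ hadd _ _ _; have := hadd 0 0 (vge0 _ _) (vge0 _ _).
rewrite addr0 -{1}[red 0]addr0 => /addrI; done.
Qed.

Lemma redB (F : fieldType) (v : F -> int) (hv : is_discrete_valuation v)
  (k : fieldType) (red : F -> k) :
  is_residue_map v red -> forall x y, OF v x -> OF v y -> red (x - y) = red x - red y.
Proof.
move=> hr x y hx hy; have [_ hadd _ _ _] := hr.
have hNy : OF v (- y) by rewrite /OF vgeN.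
have hN : red (- y) = - red y.
  have := hadd y (- y) hy hNy; rewrite subrr (red0 hr) => /eqP.
  by rewrite eq_sym addr_eq0 => /eqP ->; rewrite opprK.
by rewrite hadd // hN.
Qed.

Lemma red_eq (F : fieldType) (v : F -> int) (hv : is_discrete_valuation v)
  (k : fieldType) (red : F -> k) :
  is_residue_map v red -> forall x y, OF v x -> OF v y ->
  (red x = red y <-> vge v (x - y) 1).
Proof.
move=> hr x y hx hy; have [_ _ _ hker _] := hr.
have hxy : OF v (x - y) by apply: vgeB.
rewrite -hker // (redB hv hr) //; split => [->|/eqP]; first by rewrite subrr.
by rewrite subr_eq0 => /eqP.
Qed.

Lemma tl_OF (F : fieldType) (v : F -> int) (k : finFieldType) (red : F -> k) tl :
  is_teichmuller v red tl -> forall l, OF v (tl l).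
Proof.
case=> h0 h l; have [->|hl] := eqVneq l 0; first by rewrite h0 /OF vge0.
by case: (h l hl).
Qed.

Lemma red_tl (F : fieldType) (v : F -> int) (k : finFieldType) (red : F -> k) tl :
  is_residue_map v red -> is_teichmuller v red tl -> forall l, red (tl l) = l.
Proof.
move=> hr [h0 h] l; have [->|hl] := eqVneq l 0; first by rewrite h0 (red0 hr).
by case: (h l hl).
Qed.

Lemma Iset0 (F : fieldType) (k : finFieldType) (tl : k -> F) pi x :
  Iset tl pi 0 x <-> x = 0.
Proof.
split; first by case=> lam ->; rewrite big_ord0.
move=> ->; exists (fun _ => 0); by rewrite big_ord0.
Qed.

Lemma IsetS (F : fieldType) (k : finFieldType) (tl : k -> F) pi n x :
  Iset tl pi n.+1 x <-> exists l y, Iset tl pi n y /\ x = tl l + pi * y.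
Proof.
split.
  case=> lam ->; exists (lam ord0), (\sum_(i < n) pi ^+ i * tl (lam (lift ord0 i))).
  split; first by exists (fun i => lam (lift ord0 i)).
  rewrite big_ord_recl expr0 mul1r mulr_sumr; congr (_ + _).
  by apply: eq_bigr => i _; rewrite lift0 exprS mulrA.
case=> l [y [[lam ->] ->]].
exists (fun j => if unlift ord0 j is Some i then lam i else l).
rewrite big_ord_recl unlift_none expr0 mul1r mulr_sumr; congr (_ + _).
by apply: eq_bigr => i _; rewrite liftK lift0 exprS mulrA.
Qed.


Lemma vpiX (F : fieldType) (v : F -> int) (hv : is_discrete_valuation v) pi n :
  pi != 0 -> v pi = 1 -> v (pi ^+ n) = n%:Z.
Proof. by move=> h0 h1; rewrite (vX hv) // h1 mulr1. Qed.

Lemma vpiXN (F : fieldType) (v : F -> int) (hv : is_discrete_valuation v) pi n :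
  pi != 0 -> v pi = 1 -> v (pi ^- n) = - n%:Z.
Proof. by move=> h0 h1; rewrite (vXN hv) // h1 mulr1. Qed.

Lemma Iset_OF (F : fieldType) (v : F -> int) (hv : is_discrete_valuation v)
  (k : finFieldType) (red : F -> k) tl pi :
  is_teichmuller v red tl -> OF v pi -> forall n x, Iset tl pi n x -> OF v x.
Proof.
move=> ht hpi; elim=> [|n IH] x; first by move/Iset0 => ->; exact: vge0.
case/IsetS => l [y [hy ->]]; apply: vgeD => //; first exact: tl_OF ht l.
by have := vgeM hv hpi (IH y hy).
Qed.

Lemma Iset_exist (F : fieldType) (v : F -> int) (hv : is_discrete_valuation v)
  (k : finFieldType) (red : F -> k) tl pi :
  is_residue_map v red -> is_teichmuller v red tl -> pi != 0 -> v pi = 1 ->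
  forall n x, OF v x -> exists2 kap, Iset tl pi n kap & vge v (x - kap) n.
Proof.
move=> hr ht hpi0 hpi; elim=> [|n IH] x hx.
  by exists 0; [apply/Iset0|rewrite subr0; exact: hx].
have htl := tl_OF ht (red x).
have h1 : vge v (x - tl (red x)) 1.
  by apply/(red_eq hv hr) => //; rewrite (red_tl hr ht).
pose y := pi^-1 * (x - tl (red x)).
have hy : OF v y.
  have := vgeM hv (vge_v v pi^-1) h1; rewrite (vV hv) // hpi.
  by move/vge_le; apply.
have [kap hk1 hk2] := IH y hy.
exists (tl (red x) + pi * kap); first by apply/IsetS; exists (red x), kap.
have -> : x - (tl (red x) + pi * kap) = pi * (y - kap).
  by rewrite /y mulrBr mulrA mulfV // mul1r opprD addrA.
have := vgeM hv (vge_v v pi) hk2; rewrite hpi.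
by move/vge_le; apply; lia.
Qed.

Lemma Iset_uniq (F : fieldType) (v : F -> int) (hv : is_discrete_valuation v)
  (k : finFieldType) (red : F -> k) tl pi :
  is_residue_map v red -> is_teichmuller v red tl -> pi != 0 -> v pi = 1 ->
  forall n x1 x2, Iset tl pi n x1 -> Iset tl pi n x2 -> vge v (x1 - x2) n -> x1 = x2.
Proof.
move=> hr ht hpi0 hpi.
have hOpi : OF v pi by rewrite /OF vge_nz // hpi.
elim=> [|n IH] x1 x2; first by move=> /Iset0 -> /Iset0 ->.
case/IsetS => l1 [y1 [hy1 ->]]; case/IsetS => l2 [y2 [hy2 ->]] h.
have o1 := Iset_OF hv ht hOpi hy1; have o2 := Iset_OF hv ht hOpi hy2.
have hpy : vge v (pi * (y1 - y2)) 1.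
  by have := vgeM hv (vge_v v pi) (vgeB hv o1 o2); rewrite hpi addr0.
have hl : l1 = l2.
  rewrite -(red_tl hr ht l1) -(red_tl hr ht l2).
  apply/(red_eq hv hr); try exact: tl_OF ht _.
  have -> : tl l1 - tl l2 = (tl l1 + pi * y1 - (tl l2 + pi * y2)) - pi * (y1 - y2).
    by ring.
  by apply: vgeB => //; apply: vge_le h _; lia.
subst l2.
have e : tl l1 + pi * y1 - (tl l1 + pi * y2) = pi * (y1 - y2) by ring.
rewrite e in h.
have := vge_invM hv hpi0 h; rewrite hpi => h'.
rewrite (IH y1 y2 hy1 hy2) //; apply: vge_le h' _; lia.
Qed.


Lemma mx2_1 (F : fieldType) : mx2 1 0 0 1 = 1%:M :> 'M[F]_2.
Proof.
apply/matrixP => i j; rewrite !mxE.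
by case: i => [[|[|//]]] Hi; case: j => [[|[|//]]] Hj.
Qed.

Lemma OF_mx2 (F : fieldType) (v : F -> int) a b c d :
  OF v a -> OF v b -> OF v c -> OF v d -> forall i j, OF v (mx2 a b c d i j).
Proof. by move=> ha hb hc hd i j; rewrite mxE; do 2 case: ifP. Qed.

Definition Pc (F : fieldType) (v : F -> int) (k : finFieldType) (tl : k -> F) pi
  (g : 'M[F]_2) :=
  exists b m kappa, rep_index tl pi b m kappa /\
       exists2 h, SL2O v h & g = h *m rep pi b m kappa.

Lemma caseF (F : fieldType) (v : F -> int) (hv : is_discrete_valuation v)
  (k : finFieldType) (red : F -> k) tl pi :
  is_residue_map v red -> is_teichmuller v red tl -> pi != 0 -> v pi = 1 ->
  forall a b c d, a * d - b * c = 1 -> d != 0 ->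
  vge v a (v d) -> vge v b (v d) -> vge v c (v d) -> Pc v tl pi (mx2 a b c d).
Proof.
move=> hr ht hpi0 hpi a b c d hdet hd ha hb hc.
have hf : v d <= 0.
  rewrite leNgt; apply/negP => hf.
  have h1 : vge v (a * d - b * c) 1.
    apply: (vgeB hv).
      by have := vgeM hv ha (vge_v v d); move/vge_le; apply; lia.
    by have := vgeM hv hb hc; move/vge_le; apply; lia.
  by move: h1; rewrite hdet (vge1 hv).
set m := `|v d|%N.
have hm : v d = - m%:Z by rewrite /m; lia.
have hdi : vge v d^-1 m by rewrite vge_nz ?invr_eq0 // (vV hv) // hm opprK.
pose k0 := c * d^-1.
have hk0 : OF v k0.
  by have := vgeM hv hc (vge_v v d^-1); rewrite (vV hv) // addrN.
have [kap hk1 hk2] := Iset_exist hv hr ht hpi0 hpi (2 * m) hk0.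
have hpm : pi ^+ m != 0 by rewrite expf_neq0.
have vpm : vge v (pi ^+ m) m by rewrite vge_nz // (vpiX hv).
have vpmi : vge v (pi ^- m) (- m%:Z) by rewrite vge_nz ?invr_eq0 // (vpiXN hv).
exists false, m, kap; split; first exact: hk1.
pose N := mx2 (pi ^- m) 0 (- (pi ^- m) * kap) (pi ^+ m).
have hNr : N *m rep pi false m kap = 1%:M.
  rewrite /N /rep mx2_mul -mx2_1; congr mx2; field; exact: hpm.
exists (mx2 a b c d *m N); last by rewrite -mulmxA hNr mulmx1.
split.
  by rewrite det_mulmx !det_mx2 hdet mul1r mul0r subr0 mulVf.
rewrite /N mx2_mul; apply: OF_mx2.
- have -> : a * pi ^- m + b * (- pi ^- m * kap) =
            pi ^- m * ((a * d - b * c) * d^-1 + b * (k0 - kap)).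
    rewrite /k0; field; rewrite hd hpm //.
  have hbk : vge v (b * (k0 - kap)) m.
    by have := vgeM hv hb hk2; move/vge_le; apply; lia.
  rewrite hdet mul1r; have := vgeM hv vpmi (vgeD hv hdi hbk).
  by move/vge_le; apply; lia.
- rewrite mulr0 add0r; have := vgeM hv hb vpm; move/vge_le; apply; lia.
- have -> : c * pi ^- m + d * (- pi ^- m * kap) = pi ^- m * (d * (k0 - kap)).
    rewrite /k0; field; rewrite hd hpm //.
  have := vgeM hv vpmi (vgeM hv (vge_v v d) hk2); move/vge_le; apply; lia.
- rewrite mulr0 add0r; have := vgeM hv (vge_v v d) vpm; move/vge_le; apply; lia.
Qed.

Lemma caseT (F : fieldType) (v : F -> int) (hv : is_discrete_valuation v)
  (k : finFieldType) (red : F -> k) tl pi :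
  is_residue_map v red -> is_teichmuller v red tl -> pi != 0 -> v pi = 1 ->
  forall a b c d, a * d - b * c = 1 -> c != 0 ->
  vge v a (v c) -> vge v b (v c + 1) -> vge v d (v c + 1) -> Pc v tl pi (mx2 a b c d).
Proof.
move=> hr ht hpi0 hpi a b c d hdet hc ha hb hd.
have hf : v c <= -1.
  rewrite leNgt; apply/negP => hf.
  have h1 : vge v (a * d - b * c) 1.
    apply: (vgeB hv).
      by have := vgeM hv ha hd; move/vge_le; apply; lia.
    by have := vgeM hv hb (vge_v v c); move/vge_le; apply; lia.
  by move: h1; rewrite hdet (vge1 hv).
set m := `|v c|%N.
have hm : v c = - m%:Z by rewrite /m; lia.
have hm1 : (1 <= m)%N by rewrite /m; lia.
have hci : vge v c^-1 m by rewrite vge_nz ?invr_eq0 // (vV hv) // hm opprK.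
have vpi : vge v pi 1 by rewrite vge_nz // hpi.
have vpii : vge v pi^-1 (-1) by rewrite vge_nz ?invr_eq0 // (vV hv) // hpi.
pose k0 := - (d * (pi^-1 * c^-1)).
have hk0 : OF v k0.
  rewrite /OF /k0 vgeN //.
  have := vgeM hv hd (vgeM hv vpii (vge_v v c^-1)); rewrite (vV hv) //.
  by move/vge_le; apply; lia.
have [kap hk1 hk2] := Iset_exist hv hr ht hpi0 hpi (2 * m - 1) hk0.
have hpm : pi ^+ m != 0 by rewrite expf_neq0.
have vpm : vge v (pi ^+ m) m by rewrite vge_nz // (vpiX hv).
have vpmi : vge v (pi ^- m) (- m%:Z) by rewrite vge_nz ?invr_eq0 // (vpiXN hv).
have hk2' : vge v (kap - k0) (2 * m - 1)%N.
  by rewrite -(vgeN hv) opprB.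
exists true, m, kap; split; first by split.
pose N := mx2 (- (pi ^- m * pi) * kap) (pi ^+ m) (- pi ^- m) 0.
have hNr : N *m rep pi true m kap = 1%:M.
  rewrite /N /rep mx2_mul -mx2_1; congr mx2; field; exact: hpm.
exists (mx2 a b c d *m N); last by rewrite -mulmxA hNr mulmx1.
split.
  by rewrite det_mulmx !det_mx2 hdet mul1r mulr0 sub0r mulrN opprK mulfV.
rewrite /N mx2_mul; apply: OF_mx2.
- have -> : a * (- (pi ^- m * pi) * kap) + b * - pi ^- m =
            pi ^- m * ((a * d - b * c) * c^-1 - a * pi * (kap - k0)).
    rewrite /k0; field; rewrite hc hpm hpi0 //.
  have hak : vge v (a * pi * (kap - k0)) m.
    by have := vgeM hv (vgeM hv ha vpi) hk2'; move/vge_le; apply; clear -hm hm1; lia.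
  rewrite hdet mul1r; have := vgeM hv vpmi (vgeB hv hci hak).
  by move/vge_le; apply; clear -hm hm1; lia.
- rewrite mulr0 addr0; have := vgeM hv ha vpm; move/vge_le; apply; clear -hm hm1; lia.
- have -> : c * (- (pi ^- m * pi) * kap) + d * - pi ^- m =
            pi ^- m * (pi * c * (k0 - kap)).
    rewrite /k0; field; rewrite hc hpm hpi0 //.
  have := vgeM hv vpmi (vgeM hv (vgeM hv vpi (vge_v v c)) hk2); move/vge_le; apply; clear -hm hm1; lia.
- rewrite mulr0 addr0; have := vgeM hv (vge_v v c) vpm; move/vge_le; apply; clear -hm hm1; lia.
Qed.


Lemma nvge (F : fieldType) (v : F -> int) x N : ~~ vge v x N -> x != 0 /\ v x < N.
Proof. by rewrite /vge negb_or -ltNge => /andP[]. Qed.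

Lemma OFD (F : fieldType) (v : F -> int) (hv : is_discrete_valuation v) x y :
  OF v x -> OF v y -> OF v (x + y).
Proof. exact: vgeD. Qed.

Lemma OFM (F : fieldType) (v : F -> int) (hv : is_discrete_valuation v) x y :
  OF v x -> OF v y -> OF v (x * y).
Proof. by move=> h1 h2; have := vgeM hv h1 h2. Qed.

Lemma OFN (F : fieldType) (v : F -> int) (hv : is_discrete_valuation v) x :
  OF v (- x) = OF v x.
Proof. exact: vgeN. Qed.

Lemma OF_entry (F : fieldType) (v : F -> int) h i j : SL2O v h -> OF v (h i j).
Proof. by case=> _ ->. Qed.

Lemma swapP (F : fieldType) (v : F -> int) (hv : is_discrete_valuation v)
  (k : finFieldType) (tl : k -> F) pi a b c d :
  Pc v tl pi (mx2 c d (-a) (-b)) -> Pc v tl pi (mx2 a b c d).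
Proof.
case=> bb [m [kap [hi [h hh e]]]]; exists bb, m, kap; split => //.
exists (mx2 0 (-1) 1 0 *m h).
  split; first by rewrite det_mulmx det_mx2 hh.1 mulr1; ring.
  have o := OF_entry (v:=v) _ _ hh.
  rewrite (@mx2_eta _ h) mx2_mul; apply: OF_mx2;
    rewrite ?mul0r ?add0r ?addr0 ?mul1r ?mulN1r ?(OFN hv) //.
have -> : mx2 0 (-1) 1 0 *m h *m rep pi bb m kap = mx2 0 (-1) 1 0 *m (h *m rep pi bb m kap) by rewrite mulmxA.
by rewrite -e mx2_mul; congr mx2; ring.
Qed.

Lemma main_d (F : fieldType) (v : F -> int) (hv : is_discrete_valuation v)
  (k : finFieldType) (red : F -> k) tl pi :
  is_residue_map v red -> is_teichmuller v red tl -> pi != 0 -> v pi = 1 ->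
  forall a b c d, a * d - b * c = 1 -> d != 0 -> vge v b (v d) ->
  Pc v tl pi (mx2 a b c d).
Proof.
move=> hr ht hpi0 hpi a b c d hdet hd hb.
have [/andP[ha hc]|hn] := boolP (vge v a (v d) && vge v c (v d)).
  exact: (caseF hv hr ht hpi0 hpi hdet hd ha hb hc).
have [/andP[hc ha]|hn2] := boolP ((c != 0) && vge v a (v c)).
  have hlt : v c < v d.
    rewrite ltNge; apply/negP => hle; move/negP: hn; apply; apply/andP; split.
      exact: vge_le ha hle.
    by rewrite vge_nz.
  apply: (caseT hv hr ht hpi0 hpi hdet hc ha).
    by apply: vge_le hb _; rewrite -lezD1 in hlt.
  by rewrite vge_nz //; rewrite -lezD1 in hlt.
have [ha hac hlt] : [/\ a != 0, vge v c (v a) & v a < v d].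
  have [hc0|hc0] := eqVneq c 0.
    subst c; move: hn; rewrite (vge0 v (v d)) andbT => /nvge[ha hlt]; split => //; exact: vge0.
  move: hn2; rewrite hc0 /= => /nvge[ha hlt]; split => //.
    by rewrite vge_nz //; apply: ltW.
  rewrite ltNge; apply/negP => hle; move/negP: hn; apply; apply/andP; split.
    by rewrite vge_nz.
  by rewrite vge_nz //; apply: le_trans hle (ltW hlt).
apply: (swapP hv).
apply: (caseT hv hr ht hpi0 hpi (a:=c) (b:=d) (c:=-a) (d:=-b)).
- by rewrite -hdet; ring.
- by rewrite oppr_eq0.
- by rewrite (vN hv).
- rewrite (vN hv) //; apply: vge_le (vge_v v d) _; by rewrite lezD1.
- rewrite (vN hv) // (vgeN hv); apply: vge_le hb _; by rewrite -lezD1 in hlt.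
Qed.

Lemma main_ex (F : fieldType) (v : F -> int) (hv : is_discrete_valuation v)
  (k : finFieldType) (red : F -> k) tl pi :
  is_residue_map v red -> is_teichmuller v red tl -> pi != 0 -> v pi = 1 ->
  forall a b c d, a * d - b * c = 1 -> Pc v tl pi (mx2 a b c d).
Proof.
move=> hr ht hpi0 hpi a b c d hdet.
have [/andP[hd hb]|hn] := boolP ((d != 0) && vge v b (v d)).
  exact: (main_d hv hr ht hpi0 hpi hdet hd hb).
have [hb hdb] : b != 0 /\ vge v d (v b).
  have [hd0|hd] := eqVneq d 0.
    subst d; split; last exact: vge0.
    by apply/eqP => hb0; move: hdet; rewrite hb0 mulr0 mul0r subr0 => /eqP; rewrite eq_sym oner_eq0.
  move: hn; rewrite hd /= => /nvge[hb hlt]; split => //.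
  by rewrite vge_nz //; apply: ltW.
apply: (swapP hv); apply: (main_d hv hr ht hpi0 hpi (a:=c) (b:=d) (c:=-a) (d:=-b)).
- by rewrite -hdet; ring.
- by rewrite oppr_eq0.
- by rewrite (vN hv).
Qed.


Lemma mx2_00 (F : fieldType) (a b c d : F) : mx2 a b c d 0 0 = a. Proof. by rewrite mxE. Qed.
Lemma mx2_01 (F : fieldType) (a b c d : F) : mx2 a b c d 0 1 = b. Proof. by rewrite mxE. Qed.
Lemma mx2_10 (F : fieldType) (a b c d : F) : mx2 a b c d 1 0 = c. Proof. by rewrite mxE. Qed.
Lemma mx2_11 (F : fieldType) (a b c d : F) : mx2 a b c d 1 1 = d. Proof. by rewrite mxE. Qed.

Definition Ninv (F : fieldType) (pi : F) (b : bool) (m : nat) (kap : F) : 'M[F]_2 :=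
  if b then mx2 (- (pi ^- m * pi) * kap) (pi ^+ m) (- pi ^- m) 0
  else mx2 (pi ^- m) 0 (- (pi ^- m) * kap) (pi ^+ m).

Lemma rep_Ninv (F : fieldType) (pi : F) b m kap : pi != 0 ->
  rep pi b m kap *m Ninv pi b m kap = 1%:M.
Proof.
move=> hpi; have hpm : pi ^+ m != 0 by rewrite expf_neq0.
by case: b; rewrite /rep /Ninv mx2_mul -mx2_1; congr mx2; field.
Qed.

Lemma OF_pipow (F : fieldType) (v : F -> int) (hv : is_discrete_valuation v) pi a b :
  pi != 0 -> v pi = 1 -> OF v (pi ^+ a * pi ^- b) -> (b <= a)%N.
Proof.
move=> h0 h1; rewrite /OF vge_nz ?mulf_neq0 ?invr_eq0 ?expf_neq0 //.
rewrite (vM hv) ?invr_eq0 ?expf_neq0 // (vpiX hv) // (vpiXN hv) //; lia.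
Qed.

Lemma OF_pipow' (F : fieldType) (v : F -> int) (hv : is_discrete_valuation v) pi a b :
  pi != 0 -> v pi = 1 -> OF v (pi ^- a * pi ^+ b) -> (a <= b)%N.
Proof. by move=> h0 h1; rewrite mulrC; apply: OF_pipow. Qed.

Lemma unit_contra (F : fieldType) (v : F -> int) (hv : is_discrete_valuation v) pi y k1 k2 :
  v pi = 1 -> y != 0 -> v y <= -1 -> OF v k1 -> OF v k2 ->
  ~~ OF v (y * (1 + pi * k1 * k2)).
Proof.
move=> h1 hy hvy o1 o2; apply/negP => h.
have := vge_invM hv hy h => h'.
have hz : vge v (pi * k1 * k2) 1.
  have hp : vge v pi 1 by apply: vge_le (vge_v v pi) _; rewrite h1.
  by have := vgeM hv (vgeM hv hp o1) o2; rewrite !addr0.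
have : vge v (1 + pi * k1 * k2 - pi * k1 * k2) 1.
  apply: (vgeB hv) => //; apply: vge_le h' _; lia.
by rewrite addrK (vge1 hv).
Qed.

Lemma uniq_rep (F : fieldType) (v : F -> int) (hv : is_discrete_valuation v)
  (k : finFieldType) (red : F -> k) tl pi :
  is_residue_map v red -> is_teichmuller v red tl -> pi != 0 -> v pi = 1 ->
  forall b1 m1 k1 b2 m2 k2,
  rep_index tl pi b1 m1 k1 -> rep_index tl pi b2 m2 k2 ->
  forall h, SL2O v h -> rep pi b1 m1 k1 = h *m rep pi b2 m2 k2 ->
  (b1, m1, k1) = (b2, m2, k2).
Proof.
move=> hr ht hpi0 hpi b1 m1 k1 b2 m2 k2 hi1 hi2 h hh e.
have hOpi : OF v pi by rewrite /OF vge_nz // hpi.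
have hN : h = rep pi b1 m1 k1 *m Ninv pi b2 m2 k2.
  by rewrite e -mulmxA rep_Ninv // mulmx1.
have hO : forall i j, OF v ((rep pi b1 m1 k1 *m Ninv pi b2 m2 k2) i j).
  by move=> i j; rewrite -hN; apply: OF_entry.
clear e hN hh.
have hpm : forall n, pi ^+ n != 0 by move=> n; rewrite expf_neq0.
have hpmi : forall n, pi ^- n != 0 by move=> n; rewrite invr_eq0 expf_neq0.
have o1 : OF v k1.
  by move: hi1; rewrite /rep_index; case: ifP => _ => [[_]|] hi; exact: (Iset_OF hv ht hOpi hi).
have o2 : OF v k2.
  by move: hi2; rewrite /rep_index; case: ifP => _ => [[_]|] hi; exact: (Iset_OF hv ht hOpi hi).
case: b1 hi1 hO => hi1 hO; case: b2 hi2 hO => hi2 hO; rewrite /rep /Ninv in hO.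
- have h00 := hO 0 0; have h11 := hO 1 1; have h10 := hO 1 0.
  rewrite mx2_mul mx2_00 (_ : _ + _ = pi ^+ m1 * pi ^- m2) in h00; last by ring.
  rewrite mx2_mul mx2_11 (_ : _ + _ = pi ^- m1 * pi ^+ m2) in h11; last by ring.
  have hm : m1 = m2.
    by apply/eqP; rewrite eqn_leq (OF_pipow hv hpi0 hpi h00) (OF_pipow' hv hpi0 hpi h11).
  subst m2.
  rewrite mx2_mul mx2_10 in h10.
  rewrite (_ : _ + _ = (pi ^- m1 * pi ^- m1 * pi) * (k1 - k2)) in h10; last by ring.
  idtac.
  have hy : pi ^- m1 * pi ^- m1 * pi != 0 by rewrite !mulf_neq0.
  have := vge_invM hv hy h10.
  rewrite !(vM hv) ?mulf_neq0 // !(vpiXN hv) // hpi => hk.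
  case: hi1 => hm1 hi1; case: hi2 => _ hi2.
  rewrite (Iset_uniq hv hr ht hpi0 hpi hi1 hi2) //.
  by apply: vge_le hk _; lia.
- exfalso; case: hi1 => hm1 hi1.
  have h10 := hO 1 0; rewrite mx2_mul mx2_10 in h10.
  rewrite (_ : _ + _ = (pi ^- m1 * pi ^- m2) * (1 + pi * k1 * k2)) in h10; last by ring.
  idtac; move: h10; apply/negP; apply: (unit_contra hv) => //.
    by rewrite mulf_neq0.
  by rewrite (vM hv) // !(vpiXN hv) //; lia.
- exfalso; case: hi2 => hm2 hi2.
  have h10 := hO 1 0; rewrite mx2_mul mx2_10 in h10.
  rewrite (_ : _ + _ = (- (pi ^- m1 * pi ^- m2)) * (1 + pi * k1 * k2)) in h10; last by ring.
  idtac; move: h10; apply/negP; apply: (unit_contra hv) => //.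
    by rewrite oppr_eq0 mulf_neq0.
  by rewrite (vN hv) ?mulf_neq0 // (vM hv) // !(vpiXN hv) //; lia.
- have h00 := hO 0 0; have h11 := hO 1 1; have h10 := hO 1 0.
  rewrite mx2_mul mx2_00 (_ : _ + _ = pi ^+ m1 * pi ^- m2) in h00; last by ring.
  rewrite mx2_mul mx2_11 (_ : _ + _ = pi ^- m1 * pi ^+ m2) in h11; last by ring.
  have hm : m1 = m2.
    by apply/eqP; rewrite eqn_leq (OF_pipow hv hpi0 hpi h00) (OF_pipow' hv hpi0 hpi h11).
  subst m2.
  rewrite mx2_mul mx2_10 in h10.
  rewrite (_ : _ + _ = (pi ^- m1 * pi ^- m1) * (k1 - k2)) in h10; last by ring.
  idtac.
  have hy : pi ^- m1 * pi ^- m1 != 0 by rewrite !mulf_neq0.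
  have := vge_invM hv hy h10.
  rewrite !(vM hv) ?mulf_neq0 // !(vpiXN hv) // => hk.
  rewrite (Iset_uniq hv hr ht hpi0 hpi hi1 hi2) //.
  by apply: vge_le hk _; lia.
Qed.

Unset Implicit Arguments. Set Strict Implicit.

Theorem lemma2p3
  (p : nat) (F : fieldType) (v : F -> int) (k : finFieldType)
  (red : F -> k) (tlift : k -> F) (pi : F)
  (hp : prime p)
  (hchar0 : [pchar F] =i pred0)
  (hv : is_discrete_valuation v)
  (hcomplete : v_complete v)
  (hred : is_residue_map v red)
  (hcharp : p \in [pchar k])
  (hteich : is_teichmuller v red tlift)
  (hpi0 : pi != 0) (hpi : v pi = 1) :
  (forall b m kappa, rep_index tlift pi b m kappa -> SL2 (rep pi b m kappa)) /\
  (forall g : 'M[F]_2, SL2 g ->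
     exists b m kappa, rep_index tlift pi b m kappa /\
       exists2 h, SL2O v h & g = h *m rep pi b m kappa) /\
  (forall b1 m1 kappa1 b2 m2 kappa2,
     rep_index tlift pi b1 m1 kappa1 -> rep_index tlift pi b2 m2 kappa2 ->
     forall h, SL2O v h -> rep pi b1 m1 kappa1 = h *m rep pi b2 m2 kappa2 ->
     (b1, m1, kappa1) = (b2, m2, kappa2)).
Proof.
split.
  move=> b m kap _; rewrite /SL2 /rep.
  have hpm : pi ^+ m != 0 by rewrite expf_neq0.
  by case: b; rewrite det_mx2; field.
split.
  move=> g; rewrite /SL2 (@mx2_eta _ g) det_mx2 => hdet.
  exact: (main_ex hv hred hteich hpi0 hpi hdet).
exact: (uniq_rep hv hred hteich hpi0 hpi).
Qed.
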